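(* Let $\Sigma$ be a signature, $T$ a monad on sets carrying a continuous $\Sigma$-algebra structure, and $\Gamma$ a relator for the monad $T$ that is inductive and respects $\Sigma$. Then the closed part of the Howe extension $\precsim^H$ of applicative $\Gamma$-similarity, namely $(\{(M,N)\mid\emptyset\vdash M\precsim^H_{\mathcal{T}}N\},\{(V,W)\mid\emptyset\vdash V\precsim^H_{\mathcal{V}}W\})$, is an applicative $\Gamma$-simulation.
   Context: An $\omega$CPPO is a poset with least element $\bot$ in which every $\omega$-chain has a lub; continuous = monotone and preserving such lubs. $T$ (unit $\eta$, bind $u\texttt{>>=}f$) carries a continuous $\Sigma$-algebra structure if each $TX$ is an $\omega$CPPO, bind is continuous in both arguments, and each $\sigma\in\Sigma$ of arity $k$ is interpreted by a continuous $\sigma^T:(TX)^k\to TX$. A relator $\Gamma$ for $T$ assigns to each $R\subseteq X\times Y$ a relation $\Gamma R\subseteq TX\times TY$ with: $=_{TX}\subseteq\Gamma(=_X)$; $\Gamma S\circ\Gamma R\subseteq\Gamma(S\circ R)$; $\Gamma((f\times g)^{-1}R)=(Tf\times Tg)^{-1}\Gamma R$ where $(f\times g)^{-1}R=\{(z,w)\mid f(z)\,R\,g(w)\}$; monotone in $R$; $x\,R\,y\Rightarrow\eta(x)\,\Gamma R\,\eta(y)$; and if $x\,R\,y\Rightarrow f(x)\,\Gamma S\,g(y)$ for all $x,y$ then $u\,\Gamma R\,v\Rightarrow(u\texttt{>>=}f)\,\Gamma S\,(v\texttt{>>=}g)$. Inductive: for every $R$, $\bot\,\Gamma R\,v$ for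 all $v$, and for every $\omega$-chain $(u_n)$, $(\forall n.\ u_n\,\Gamma R\,v)\Rightarrow\bigsqcup_n u_n\,\Gamma R\,v$. Respects $\Sigma$: $u_i\,\Gamma R\,v_i$ for all $i$ implies $\sigma^T(\vec u)\,\Gamma R\,\sigma^T(\vec v)$. Terms/values: $M,N::=\mathsf{return}\,V\mid VW\mid(M\ \mathsf{to}\ x.N)\mid\sigma(M_1,\dots,M_{\alpha(\sigma)})$, $V,W::=x\mid\lambda x.M$, modulo $\alpha$-equivalence; $M[V/x]$ substitution; $\mathcal{T}_0,\mathcal{V}_0$ closed terms/values; $\mathcal{T}(\bar x),\mathcal{V}(\bar x)$ those with free variables in $\bar x$. For closed $M$: $M^{(0)}=\bot$, $(\mathsf{return}\,V)^{(n+1)}=\eta(V)$, $((\lambda x.M)V)^{(n+1)}=(M[V/x])^{(n)}$, $(M\ \mathsf{to}\ x.N)^{(n+1)}=M^{(n)}\texttt{>>=}(V\mapsto(N[V/x])^{(n)})$, $(\sigma(\vec M))^{(n+1)}=\sigma^T(M_1^{(n)},\dots)$; this is an $\omega$-chain and $[\![M]\!]=\bigsqcup_nM^{(n)}$. A closed relation $R=(R_{\mathcal{T}}\subseteq\mathcal{T}_0\times\mathcal{T}_0,R_{\mathcal{V}}\subseteq\mathcal{V}_0\times\mathcal{V}_0)$ is an applicative $\Gamma$-simulation if $M\,R_{\mathcal{T}}\,N\Rightarrow[\![M]\!]\,\Gamma R_{\mathcal{V}}\,[\![N]\!]$ and $V\,R_{\mathcal{V}}\,W\Rightarrow VU\,R_{\mathcal{T}}\,WU$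 for every closed value $U$. Applicative $\Gamma$-similarity $\precsim$ is the largest one. Its open extension $\precsim^\circ$: $\bar x\vdash M\precsim^\circ_{\mathcal{T}}N$ iff $M,N\in\mathcal{T}(\bar x)$ and $M[\bar V/\bar x]\precsim_{\mathcal{T}}N[\bar V/\bar x]$ for all closed values $\bar V$ (similarly for values). The Howe extension $\precsim^H$ is the least pair of sets of triples closed under: (H1) if $x\in\bar x$ and $\bar x\vdash x\precsim^\circ_{\mathcal{V}}V$ then $\bar x\vdash x\precsim^H_{\mathcal{V}}V$; (H2) if $x\notin\bar x$, $\bar x\cup\{x\}\vdash M\precsim^H_{\mathcal{T}}L$ and $\bar x\vdash\lambda x.L\precsim^\circ_{\mathcal{V}}V$ then $\bar x\vdash\lambda x.M\precsim^H_{\mathcal{V}}V$; (H3) if $\bar x\vdash V\precsim^H_{\mathcal{V}}W$ and $\bar x\vdash\mathsf{return}\,W\precsim^\circ_{\mathcal{T}}N$ then $\bar x\vdash\mathsf{return}\,V\precsim^H_{\mathcal{T}}N$; (H4) if $\bar x\vdash V\precsim^H_{\mathcal{V}}V'$, $\bar x\vdash W\precsim^H_{\mathcal{V}}W'$, $\bar x\vdash V'W'\precsim^\circ_{\mathcal{T}}N$ then $\bar x\vdash VW\precsim^H_{\mathcal{T}}N$; (H5) if $\bar x\vdash M\precsim^H_{\mathcal{T}}L$, $\bar x\cup\{x\}\vdash M'\precsim^H_{\mathcal{T}}L'$, $\bar x\vdash(L\ \mathsf{to}\ x.L')\precsim^\circ_{\mathcal{T}}N$ then $\bar x\vdash(M\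 \mathsf{to}\ x.M')\precsim^H_{\mathcal{T}}N$; (H6) if $\bar x\vdash M_k\precsim^H_{\mathcal{T}}N_k$ for all $k\le n$ and $\bar x\vdash\sigma(N_1,\dots,N_n)\precsim^\circ_{\mathcal{T}}N$ then $\bar x\vdash\sigma(M_1,\dots,M_n)\precsim^H_{\mathcal{T}}N$. *)

(* Defs.v *)
From mathcomp Require Import all_boot.
Set Implicit Arguments. Unset Strict Implicit. Unset Printing Implicit Defensive.

Record signature := Signature { sop :> Type; sar : sop -> nat }.

(* Terms and values, well-scoped de Bruijn (= modulo alpha-equivalence)*)
Section Terms.
Variable Sg : signature.

Inductive val (n : nat) : Type :=
| Var : 'I_n -> val n
| Lam : comp n.+1 -> val n
with comp (n : nat) : Type :=
| Ret : val n -> comp n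
| App : val n -> val n -> comp n
| Seq : comp n -> comp n.+1 -> comp n            (* M to x. N *)
| Op  : forall s : Sg, ('I_(sar s) -> comp n) -> comp n.
Arguments Op {n} s _.

Definition up_ren n m (r : 'I_n -> 'I_m) : 'I_n.+1 -> 'I_m.+1 :=
  fun i => match unlift ord0 i with Some j => lift ord0 (r j) | None => ord0 end.

Fixpoint ren_val n m (r : 'I_n -> 'I_m) (v : val n) {struct v} : val m :=
  match v with
  | Var i => Var (r i)
  | Lam M => Lam (ren_comp (up_ren r) M)
  end
with ren_comp n m (r : 'I_n -> 'I_m) (M : comp n) {struct M} : comp m :=
  match M with
  | Ret V => Ret (ren_val r V)
  | App V W => App (ren_val r V) (ren_val r W)
  | Seq M1 M2 => Seq (ren_comp r M1) (ren_comp (up_ren r) M2)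
  | Op s Ms => Op s (fun i => ren_comp r (Ms i))
  end.

Definition up_sub n m (s : 'I_n -> val m) : 'I_n.+1 -> val m.+1 :=
  fun i => match unlift ord0 i with
           | Some j => ren_val (lift ord0) (s j)
           | None => Var ord0
           end.

Fixpoint sub_val n m (s : 'I_n -> val m) (v : val n) {struct v} : val m :=
  match v with
  | Var i => s i
  | Lam M => Lam (sub_comp (up_sub s) M)
  end
with sub_comp n m (s : 'I_n -> val m) (M : comp n) {struct M} : comp m :=
  match M with
  | Ret V => Ret (sub_val s V)
  | App V W => App (sub_val s V) (sub_val s W)
  | Seq M1 M2 => Seq (sub_comp s M1) (sub_comp (up_sub s) M2)
  | Op s' Ms => Op s' (fun i => sub_comp s (Ms i))
  end.

Definition subst1 (M : comp 1) (V : val 0) : comp 0 := sub_comp (fun _ => V) M.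

End Terms.
Arguments Var {Sg n} _.
Arguments Lam {Sg n} _.
Arguments Ret {Sg n} _.
Arguments App {Sg n} _ _.
Arguments Seq {Sg n} _ _.
Arguments Op {Sg n} s _.

Record cmonad (Sg : signature) := CMonad {
  mT : Type -> Type;
  ret : forall X, X -> mT X;
  bind : forall X Y, mT X -> (X -> mT Y) -> mT Y;
  bind_ret_l : forall X Y (x : X) (f : X -> mT Y), @bind X Y (@ret X x) f = f x;
  bind_ret_r : forall X (u : mT X), @bind X X u (@ret X) = u;
  bind_assoc : forall X Y Z (u : mT X) (f : X -> mT Y) (g : Y -> mT Z),
      @bind Y Z (@bind X Y u f) g = @bind X Z u (fun x => @bind Y Z (f x) g);
  le : forall X, mT X -> mT X -> Prop;
  le_refl : forall X (u : mT X), @le X u u;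
  le_trans : forall X (u v w : mT X), @le X u v -> @le X v w -> @le X u w;
  le_antisym : forall X (u v : mT X), @le X u v -> @le X v u -> u = v;
  bot : forall X, mT X;
  bot_least : forall X (u : mT X), @le X (@bot X) u;
  lub : forall X, (nat -> mT X) -> mT X;
  lub_ub : forall X (u : nat -> mT X), (forall n, @le X (u n) (u n.+1)) ->
      forall n, @le X (u n) (@lub X u);
  lub_least : forall X (u : nat -> mT X) (v : mT X), (forall n, @le X (u n) (u n.+1)) ->
      (forall n, @le X (u n) v) -> @le X (@lub X u) v;
  bind_mono_l : forall X Y (u u' : mT X) (f : X -> mT Y),
      @le X u u' -> @le Y (@bind X Y u f) (@bind X Y u' f);
  bind_mono_r : forall X Y (u : mT X) (f g : X -> mT Y),
      (forall x, @le Y (f x) (g x)) -> @le Y (@bind X Y u f) (@bind X Y u g);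
  bind_cont_l : forall X Y (u : nat -> mT X) (f : X -> mT Y),
      (forall n, @le X (u n) (u n.+1)) ->
      @bind X Y (@lub X u) f = @lub Y (fun n => @bind X Y (u n) f);
  bind_cont_r : forall X Y (u : mT X) (fs : nat -> X -> mT Y),
      (forall n x, @le Y (fs n x) (fs n.+1 x)) ->
      @bind X Y u (fun x => @lub Y (fun n => fs n x)) = @lub Y (fun n => @bind X Y u (fs n));
  opT : forall X (s : Sg), ('I_(sar s) -> mT X) -> mT X;
  opT_mono : forall X (s : Sg) (us vs : 'I_(sar s) -> mT X),
      (forall i, @le X (us i) (vs i)) -> @le X (@opT X s us) (@opT X s vs);
  opT_cont : forall X (s : Sg) (us : nat -> 'I_(sar s) -> mT X),
      (forall n i, @le X (us n i) (us n.+1 i)) ->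
      @opT X s (fun i => @lub X (fun n => us n i)) = @lub X (fun n => @opT X s (us n))
}.

Arguments mT {Sg} c X.
Arguments ret {Sg} c {X}.
Arguments bind {Sg} c {X Y}.
Arguments le {Sg} c {X}.
Arguments bot {Sg} c {X}.
Arguments lub {Sg} c {X}.
Arguments opT {Sg} c {X} s.

Definition Tmap Sg (M : cmonad Sg) X Y (f : X -> Y) (u : mT M X) : mT M Y :=
  bind M u (fun x => ret M (f x)).
Arguments Tmap {Sg} M {X Y} f u.

Definition chain Sg (M : cmonad Sg) X (u : nat -> mT M X) : Prop :=
  forall n, le M (u n) (u n.+1).
Arguments chain {Sg} M {X} u.

Record relator Sg (M : cmonad Sg) := Relator {
  Gam : forall X Y, (X -> Y -> Prop) -> mT M X -> mT M Y -> Prop;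
  rel_eq : forall X (u : mT M X), Gam (@eq X) u u;
  rel_comp : forall X Y Z (R : X -> Y -> Prop) (S : Y -> Z -> Prop) u v w,
      Gam R u v -> Gam S v w -> Gam (fun x z => exists y, R x y /\ S y z) u w;
  rel_inv : forall X Y X' Y' (f : X' -> X) (g : Y' -> Y) (R : X -> Y -> Prop) u v,
      Gam (fun z w => R (f z) (g w)) u v <-> Gam R (Tmap M f u) (Tmap M g v);
  rel_mono : forall X Y (R S : X -> Y -> Prop) u v,
      (forall x y, R x y -> S x y) -> Gam R u v -> Gam S u v;
  rel_ret : forall X Y (R : X -> Y -> Prop) x y, R x y -> Gam R (ret M x) (ret M y);
  rel_bind : forall X Y X' Y' (R : X -> Y -> Prop) (S : X' -> Y' -> Prop)
      (f : X -> mT M X') (g : Y -> mT M Y') u v,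
      (forall x y, R x y -> Gam S (f x) (g y)) -> Gam R u v ->
      Gam S (bind M u f) (bind M v g)
}.
Arguments Gam {Sg M} r {X Y} R u v.

Definition rel_inductive Sg (M : cmonad Sg) (G : relator M) : Prop :=
  (forall X Y (R : X -> Y -> Prop) (v : mT M Y), Gam G R (bot M) v) /\
  (forall X Y (R : X -> Y -> Prop) (u : nat -> mT M X) (v : mT M Y),
      chain M u -> (forall n, Gam G R (u n) v) -> Gam G R (lub M u) v).

Definition rel_respects_sig Sg (M : cmonad Sg) (G : relator M) : Prop :=
  forall X Y (R : X -> Y -> Prop) (s : Sg) (us : 'I_(sar s) -> mT M X)
    (vs : 'I_(sar s) -> mT M Y),
    (forall i, Gam G R (us i) (vs i)) -> Gam G R (opT M s us) (opT M s vs).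

Section Semantics.
Variables (Sg : signature) (M : cmonad Sg).

Fixpoint approx (k : nat) (P : comp Sg 0) {struct k} : mT M (val Sg 0) :=
  match k with
  | 0 => bot M
  | k'.+1 =>
    match P with
    | Ret V => ret M V
    | App V W => match V with
                 | Lam B => approx k' (subst1 B W)
                 | Var _ => bot M   (* unreachable: no closed variables *)
                 end
    | Seq P1 P2 => bind M (approx k' P1) (fun V => approx k' (subst1 P2 V))
    | Op s Ps => opT M s (fun i => approx k' (Ps i))
    end
  end.

Definition den (P : comp Sg 0) : mT M (val Sg 0) := lub M (fun k => approx k P).

Variable G : relator M.

Definition app_sim (RT : comp Sg 0 -> comp Sg 0 -> Prop)
                   (RV : val Sg 0 -> val Sg 0 -> Prop) : Prop :=
  (forall P Q, RT P Q -> Gam G RV (den P) (den Q)) /\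
  (forall V W, RV V W -> forall U, RT (App V U) (App W U)).

Definition simT (P Q : comp Sg 0) : Prop :=
  exists RT RV, app_sim RT RV /\ RT P Q.
Definition simV (V W : val Sg 0) : Prop :=
  exists RT RV, app_sim RT RV /\ RV V W.

Definition openT n (P Q : comp Sg n) : Prop :=
  forall Vs : 'I_n -> val Sg 0, simT (sub_comp Vs P) (sub_comp Vs Q).
Definition openV n (V W : val Sg n) : Prop :=
  forall Vs : 'I_n -> val Sg 0, simV (sub_val Vs V) (sub_val Vs W).

Inductive howeV : forall n, val Sg n -> val Sg n -> Prop :=
| H1 : forall n (x : 'I_n) (V : val Sg n), openV (Var x) V -> howeV (Var x) V
| H2 : forall n (B L : comp Sg n.+1) (V : val Sg n),
    howeT B L -> openV (Lam L) V -> howeV (Lam B) V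
with howeT : forall n, comp Sg n -> comp Sg n -> Prop :=
| H3 : forall n (V W : val Sg n) (N : comp Sg n),
    howeV V W -> openT (Ret W) N -> howeT (Ret V) N
| H4 : forall n (V V' W W' : val Sg n) (N : comp Sg n),
    howeV V V' -> howeV W W' -> openT (App V' W') N -> howeT (App V W) N
| H5 : forall n (P L : comp Sg n) (P' L' : comp Sg n.+1) (N : comp Sg n),
    howeT P L -> howeT P' L' -> openT (Seq L L') N -> howeT (Seq P P') N
| H6 : forall n (s : Sg) (Ps Ns : 'I_(sar s) -> comp Sg n) (N : comp Sg n),
    (forall i, howeT (Ps i) (Ns i)) -> openT (Op s Ns) N -> howeT (Op s Ps) N.

End Semantics.

(* Main.v *)
Require Import Defs.
From mathcomp Require Import all_boot.
From Stdlib Require Import FunctionalExtensionality.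
Set Implicit Arguments. Unset Strict Implicit.
Set Warnings "-notation-overridden".

Scheme val_ind2 := Induction for Defs.val Sort Prop with comp_ind2 := Induction for Defs.comp Sort Prop.
Combined Scheme valcomp_ind from val_ind2, comp_ind2.

Section Syn.
Variable Sg : signature.

Lemma up_ren_comp n m k (r : 'I_m -> 'I_k) (r' : 'I_n -> 'I_m) :
  up_ren r \o up_ren r' = up_ren (r \o r').
Proof.
apply: functional_extensionality => i /=; rewrite /up_ren.
by case: (unliftP ord0 i) => [j _|_] /=; rewrite ?liftK ?unlift_none.
Qed.

Lemma ren_ren n :
  (forall (v : Defs.val Sg n) m k (r : 'I_m -> 'I_k) (r' : 'I_n -> 'I_m),
      ren_val r (ren_val r' v) = ren_val (r \o r') v) /\
  (forall (t : Defs.comp Sg n) m k (r : 'I_m -> 'I_k) (r' : 'I_n -> 'I_m),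
      ren_comp r (ren_comp r' t) = ren_comp (r \o r') t).
Proof.
move: n; apply: valcomp_ind => //=.
- by move=> n c IH m k r r'; rewrite IH up_ren_comp.
- by move=> n v IH m k r r'; rewrite IH.
- by move=> n v IH w IH' m k r r'; rewrite IH IH'.
- by move=> n c IH c' IH' m k r r'; rewrite IH IH' up_ren_comp.
- move=> n s c IH m k r r'; congr Op; apply: functional_extensionality => i; exact: IH.
Qed.

Lemma up_sub_ren n m k (s : 'I_m -> Defs.val Sg k) (r : 'I_n -> 'I_m) :
  up_sub s \o up_ren r = up_sub (s \o r).
Proof.
apply: functional_extensionality => i /=; rewrite /up_ren /up_sub.
by case: (unliftP ord0 i) => [j _|_] /=; rewrite ?liftK ?unlift_none.
Qed.

Lemma sub_ren n :
  (forall (v : Defs.val Sg n) m k (s : 'I_m -> Defs.val Sg k) (r : 'I_n -> 'I_m),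
      sub_val s (ren_val r v) = sub_val (s \o r) v) /\
  (forall (t : Defs.comp Sg n) m k (s : 'I_m -> Defs.val Sg k) (r : 'I_n -> 'I_m),
      sub_comp s (ren_comp r t) = sub_comp (s \o r) t).
Proof.
move: n; apply: valcomp_ind => //=.
- by move=> n c IH m k r r'; rewrite IH up_sub_ren.
- by move=> n v IH m k r r'; rewrite IH.
- by move=> n v IH w IH' m k r r'; rewrite IH IH'.
- by move=> n c IH c' IH' m k r r'; rewrite IH IH' up_sub_ren.
- move=> n s c IH m k r r'; congr Op; apply: functional_extensionality => i; exact: IH.
Qed.

Lemma ren_up_sub n m k (r : 'I_m -> 'I_k) (s : 'I_n -> Defs.val Sg m) :
  ren_val (up_ren r) \o up_sub s = up_sub (ren_val r \o s).
Proof.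
apply: functional_extensionality => i /=; rewrite /up_sub.
case: (unliftP ord0 i) => [j _|_] /=; last by rewrite /up_ren ?unlift_none.
rewrite !(ren_ren _).1; congr ren_val.
apply: functional_extensionality => x /=; by rewrite /up_ren liftK.
Qed.

Lemma ren_sub n :
  (forall (v : Defs.val Sg n) m k (r : 'I_m -> 'I_k) (s : 'I_n -> Defs.val Sg m),
      ren_val r (sub_val s v) = sub_val (ren_val r \o s) v) /\
  (forall (t : Defs.comp Sg n) m k (r : 'I_m -> 'I_k) (s : 'I_n -> Defs.val Sg m),
      ren_comp r (sub_comp s t) = sub_comp (ren_val r \o s) t).
Proof.
move: n; apply: valcomp_ind => //=.
- by move=> n c IH m k r r'; rewrite IH ren_up_sub.
- by move=> n v IH m k r r'; rewrite IH.
- by move=> n v IH w IH' m k r r'; rewrite IH IH'.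
- by move=> n c IH c' IH' m k r r'; rewrite IH IH' ren_up_sub.
- move=> n s c IH m k r r'; congr Op; apply: functional_extensionality => i; exact: IH.
Qed.

Lemma sub_up_sub n m k (s : 'I_m -> Defs.val Sg k) (s' : 'I_n -> Defs.val Sg m) :
  sub_val (up_sub s) \o up_sub s' = up_sub (sub_val s \o s').
Proof.
apply: functional_extensionality => i /=; rewrite /up_sub.
case: (unliftP ord0 i) => [j _|_] /=; last by rewrite ?unlift_none.
rewrite (sub_ren _).1 (ren_sub _).1; congr sub_val.
apply: functional_extensionality => x /=; by rewrite ?liftK.
Qed.

Lemma sub_sub n :
  (forall (v : Defs.val Sg n) m k (s : 'I_m -> Defs.val Sg k) (s' : 'I_n -> Defs.val Sg m),
      sub_val s (sub_val s' v) = sub_val (sub_val s \o s') v) /\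
  (forall (t : Defs.comp Sg n) m k (s : 'I_m -> Defs.val Sg k) (s' : 'I_n -> Defs.val Sg m),
      sub_comp s (sub_comp s' t) = sub_comp (sub_val s \o s') t).
Proof.
move: n; apply: valcomp_ind => //=.
- by move=> n c IH m k r r'; rewrite IH sub_up_sub.
- by move=> n v IH m k r r'; rewrite IH.
- by move=> n v IH w IH' m k r r'; rewrite IH IH'.
- by move=> n c IH c' IH' m k r r'; rewrite IH IH' sub_up_sub.
- move=> n s c IH m k r r'; congr Op; apply: functional_extensionality => i; exact: IH.
Qed.

Lemma up_sub_id n : up_sub (@Var Sg n) = @Var Sg n.+1.
Proof.
apply: functional_extensionality => i /=; rewrite /up_sub.
by case: (unliftP ord0 i) => [j e|e] /=; rewrite e.
Qed.

Lemma sub_id n :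
  (forall (v : Defs.val Sg n), sub_val (@Var Sg n) v = v) /\
  (forall (t : Defs.comp Sg n), sub_comp (@Var Sg n) t = t).
Proof.
move: n; apply: valcomp_ind => //=.
- by move=> n c IH; rewrite up_sub_id IH.
- by move=> n v IH; rewrite IH.
- by move=> n v IH w IH'; rewrite IH IH'.
- by move=> n c IH c' IH'; rewrite up_sub_id IH IH'.
- move=> n s c IH; congr Op; apply: functional_extensionality => i; exact: IH.
Qed.

Lemma closed_sub0 (Vs : 'I_0 -> Defs.val Sg 0) : Vs = @Var Sg 0.
Proof. by apply: functional_extensionality => -[m Hm]; exfalso; rewrite ltn0 in Hm. Qed.

Lemma sub_val0 (Vs : 'I_0 -> Defs.val Sg 0) V : sub_val Vs V = V.
Proof. by rewrite (closed_sub0 Vs) (sub_id _).1. Qed.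
Lemma sub_comp0 (Vs : 'I_0 -> Defs.val Sg 0) V : sub_comp Vs V = V.
Proof. by rewrite (closed_sub0 Vs) (sub_id _).2. Qed.

End Syn.

Section Sem.
Variables (Sg : signature) (M : cmonad Sg).

Lemma chain_le X (u : nat -> mT M X) : chain M u -> forall m n, m <= n -> le M (u m) (u n).
Proof.
move=> Hc m n; elim: n => [|n IH]; first by rewrite leqn0 => /eqP ->; apply: le_refl.
rewrite leq_eqVlt => /orP [/eqP ->|]; first by apply: le_refl.
move=> /IH H; exact: le_trans H (Hc n).
Qed.

Lemma lub_shift X (u : nat -> mT M X) : chain M u -> lub M u = lub M (fun k => u k.+1).
Proof.
move=> Hc; apply: le_antisym.
- apply: lub_least => // n; apply: le_trans (Hc n) _; apply: (lub_ub (u := fun k => u k.+1)).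
  by move=> k; apply: Hc.
- apply: lub_least; first by move=> k; apply: Hc.
  move=> n; exact: lub_ub.
Qed.

Lemma lub_const X (x : mT M X) : lub M (fun _ => x) = x.
Proof.
apply: le_antisym.
- apply: lub_least => *; exact: le_refl.
- apply: (lub_ub (u := fun _ => x) _ 0) => n; exact: le_refl.
Qed.

Lemma lub_diag X (a : nat -> nat -> mT M X) :
  (forall k j, le M (a k j) (a k.+1 j)) -> (forall k j, le M (a k j) (a k j.+1)) ->
  lub M (fun j => lub M (fun k => a k j)) = lub M (fun k => a k k).
Proof.
move=> H1 H2.
have Hd : chain M (fun k => a k k).
  move=> k; exact: le_trans (H1 k k) (H2 k.+1 k).
have Hi : forall j, chain M (fun k => a k j) by move=> j k; apply: H1.
have Ho : chain M (fun j => lub M (fun k => a k j)).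
  move=> j; apply: lub_least => // k; apply: le_trans (H2 k j) _; exact: lub_ub.
apply: le_antisym.
- apply: lub_least => // j; apply: lub_least => // k.
  apply: (@le_trans _ _ _ _ (a (maxn k j) (maxn k j))); last exact: lub_ub.
  apply: le_trans (chain_le (Hi j) (leq_maxl k j)) _.
  apply: (chain_le (u := fun i => a (maxn k j) i)) (leq_maxr k j).
  by move=> i; apply: H2.
- apply: lub_least => // k; apply: le_trans _ (lub_ub Ho k).
  exact: (lub_ub (Hi k) k).
Qed.

Lemma approx_mono k : forall P, le M (approx M k P) (approx M k.+1 P).
Proof.
elim: k => [|k IH] P; first exact: bot_least.
case: P => [V|V W|P P'|s Ps] /=.
- exact: le_refl.
- case: V => [x|B]; [exact: le_refl| exact: IH].
- apply: le_trans (bind_mono_l _ (IH P)) _; apply: bind_mono_r => x; exact: IH.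
- apply: opT_mono => i; exact: IH.
Qed.

Lemma chain_approx P : chain M (fun k => approx M k P).
Proof. move=> k; exact: approx_mono. Qed.

Lemma den_ret V : den M (Ret V) = ret M V.
Proof. by rewrite /den lub_shift ?lub_const //; apply: chain_approx. Qed.

Lemma den_app B W : den M (App (Lam B) W) = den M (subst1 B W).
Proof. by rewrite /den lub_shift //; apply: chain_approx. Qed.

Lemma den_op s Ns : den M (Op s Ns) = opT M s (fun i => den M (Ns i)).
Proof.
rewrite /den lub_shift /=; last exact: chain_approx.
rewrite (opT_cont (us := fun n i => approx M n (Ns i))) //.
move=> n i; exact: approx_mono.
Qed.

Lemma den_seq L L' :
  den M (Seq L L') = bind M (den M L) (fun V => den M (subst1 L' V)).
Proof.
rewrite {1}/den lub_shift /=; last exact: chain_approx.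
have -> : (fun V => den M (subst1 L' V)) = (fun V => lub M (fun n => approx M n (subst1 L' V))) by [].
rewrite (@bind_cont_r _ M _ _ (den M L) (fun n V => approx M n (subst1 L' V))); last first.
  move=> n x; exact: approx_mono.
have -> : (fun n => bind M (den M L) (fun V => approx M n (subst1 L' V))) =
  (fun n => lub M (fun k => bind M (approx M k L) (fun V => approx M n (subst1 L' V)))).
  apply: functional_extensionality => n; rewrite /den bind_cont_l //; exact: chain_approx.
rewrite (lub_diag (a := fun k j => bind M (approx M k L) (fun V => approx M j (subst1 L' V)))) //.
- move=> k j; apply: bind_mono_l; exact: approx_mono.
- move=> k j; apply: bind_mono_r => x; exact: approx_mono.
Qed.

End Sem.

Scheme howeV_min := Minimality for howeV Sort Prop with howeT_min := Minimality for howeT Sort Prop.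
Combined Scheme howe_ind from howeV_min, howeT_min.

Section Howe.
Variables (Sg : signature) (M : cmonad Sg) (G : relator M).

Lemma sim_is_sim : app_sim G (simT G) (simV G).
Proof.
split.
- move=> P Q [RT [RV [[H1 H2] HPQ]]].
  apply: rel_mono (H1 _ _ HPQ) => x y Hxy; exists RT, RV; split => //; split.
- move=> V W [RT [RV [[H1 H2] HVW]]] U; exists RT, RV; split; [by split|exact: H2].
Qed.

Lemma simT_refl P : simT G P P.
Proof.
exists (fun P Q => P = Q), (fun V W => V = W); split => //; split.
- move=> P0 Q0 ->; exact: rel_eq.
- by move=> V W ->.
Qed.

Lemma simV_refl V : simV G V V.
Proof.
exists (fun P Q => P = Q), (fun V W => V = W); split => //; split.
- move=> P0 Q0 ->; exact: rel_eq.
- by move=> V0 W ->.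
Qed.

Definition compT P R := exists Q, simT G P Q /\ simT G Q R.
Definition compV V W := exists U, simV G V U /\ simV G U W.

Lemma comp_sim : app_sim G compT compV.
Proof.
have [S1 S2] := sim_is_sim; split.
- move=> P R [Q [H1 H2]]; exact: rel_comp (S1 _ _ H1) (S1 _ _ H2).
- move=> V W [U [H1 H2]] X; exists (App U X); split; [exact: S2|exact: S2].
Qed.

Lemma simT_trans P Q R : simT G P Q -> simT G Q R -> simT G P R.
Proof. move=> H1 H2; exists compT, compV; split; [exact: comp_sim| by exists Q]. Qed.

Lemma simV_trans P Q R : simV G P Q -> simV G Q R -> simV G P R.
Proof. move=> H1 H2; exists compT, compV; split; [exact: comp_sim| by exists Q]. Qed.

Lemma openT_refl n (P : Defs.comp Sg n) : openT G P P.
Proof. move=> Vs; exact: simT_refl. Qed.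
Lemma openV_refl n (P : Defs.val Sg n) : openV G P P.
Proof. move=> Vs; exact: simV_refl. Qed.
Lemma openT_trans n (P Q R : Defs.comp Sg n) : openT G P Q -> openT G Q R -> openT G P R.
Proof. move=> H1 H2 Vs; exact: simT_trans (H1 Vs) (H2 Vs). Qed.
Lemma openV_trans n (P Q R : Defs.val Sg n) : openV G P Q -> openV G Q R -> openV G P R.
Proof. move=> H1 H2 Vs; exact: simV_trans (H1 Vs) (H2 Vs). Qed.

Lemma openT_ren n m (r : 'I_n -> 'I_m) (P Q : Defs.comp Sg n) :
  openT G P Q -> openT G (ren_comp r P) (ren_comp r Q).
Proof. move=> H Vs; rewrite !(sub_ren _ _).2; exact: H. Qed.
Lemma openV_ren n m (r : 'I_n -> 'I_m) (P Q : Defs.val Sg n) :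
  openV G P Q -> openV G (ren_val r P) (ren_val r Q).
Proof. move=> H Vs; rewrite !(sub_ren _ _).1; exact: H. Qed.
Lemma openT_sub n m (s : 'I_n -> Defs.val Sg m) (P Q : Defs.comp Sg n) :
  openT G P Q -> openT G (sub_comp s P) (sub_comp s Q).
Proof. move=> H Vs; rewrite !(sub_sub _ _).2; exact: H. Qed.
Lemma openV_sub n m (s : 'I_n -> Defs.val Sg m) (P Q : Defs.val Sg n) :
  openV G P Q -> openV G (sub_val s P) (sub_val s Q).
Proof. move=> H Vs; rewrite !(sub_sub _ _).1; exact: H. Qed.

Lemma openT0 (P Q : Defs.comp Sg 0) : openT G P Q -> simT G P Q.
Proof. move=> /(_ (@Var Sg 0)); by rewrite !(sub_id _ _).2. Qed.
Lemma openV0 (P Q : Defs.val Sg 0) : simV G P Q -> openV G P Q.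
Proof. move=> H Vs; by rewrite !sub_val0. Qed.
Lemma openV0' (P Q : Defs.val Sg 0) : openV G P Q -> simV G P Q.
Proof. move=> /(_ (@Var Sg 0)); by rewrite !(sub_id _ _).1. Qed.

Lemma howe_open :
  (forall n (V W : Defs.val Sg n), howeV G V W -> forall W', openV G W W' -> howeV G V W') /\
  (forall n (P Q : Defs.comp Sg n), howeT G P Q -> forall Q', openT G Q Q' -> howeT G P Q').
Proof.
apply: howe_ind.
- move=> n x V H W' H'; apply: H1; exact: openV_trans H H'.
- move=> n B L V HB _ H W' H'; apply: H2 HB _; exact: openV_trans H H'.
- move=> n V W N HV _ H W' H'; apply: H3 HV _; exact: openT_trans H H'.
- move=> n V V' W W' N HV _ HW _ H Q' H'; apply: H4 HV HW _; exact: openT_trans H H'.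
- move=> n P L P' L' N HP _ HP' _ H Q' H'; apply: H5 HP HP' _; exact: openT_trans H H'.
- move=> n s Ps Ns N HP _ H Q' H'; apply: H6 HP _; exact: openT_trans H H'.
Qed.

Lemma howe_refl n :
  (forall (V : Defs.val Sg n), howeV G V V) /\ (forall (P : Defs.comp Sg n), howeT G P P).
Proof.
move: n; apply: valcomp_ind.
- move=> n x; apply: H1; exact: openV_refl.
- move=> n c IH; apply: H2 IH _; exact: openV_refl.
- move=> n v IH; apply: H3 IH _; exact: openT_refl.
- move=> n v IH w IH'; apply: H4 IH IH' _; exact: openT_refl.
- move=> n c IH c' IH'; apply: H5 IH IH' _; exact: openT_refl.
- move=> n s c IH; apply: H6 IH _; exact: openT_refl.
Qed.

Lemma howe_ren :
  (forall n (V W : Defs.val Sg n), howeV G V W ->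
     forall m (r : 'I_n -> 'I_m), howeV G (ren_val r V) (ren_val r W)) /\
  (forall n (P Q : Defs.comp Sg n), howeT G P Q ->
     forall m (r : 'I_n -> 'I_m), howeT G (ren_comp r P) (ren_comp r Q)).
Proof.
apply: howe_ind => /=.
- move=> n x V H m r; apply: H1; exact: (openV_ren r H).
- move=> n B L V HB IH H m r; apply: H2 (IH _ (up_ren r)) _; exact: (openV_ren r H).
- move=> n V W N HV IH H m r; apply: H3 (IH _ r) _; exact: (openT_ren r H).
- move=> n V V' W W' N HV IH HW IH' H m r; apply: H4 (IH _ r) (IH' _ r) _; exact: (openT_ren r H).
- move=> n P L P' L' N HP IH HP' IH' H m r; apply: H5 (IH _ r) (IH' _ (up_ren r)) _.
  exact: (openT_ren r H).
- move=> n s Ps Ns N HP IH H m r; apply: (H6 (Ns := fun i => ren_comp r (Ns i))).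
  + move=> i; exact: IH.
  + exact: (openT_ren r H).
Qed.

Lemma howe_up n m (s s' : 'I_n -> Defs.val Sg m) :
  (forall i, howeV G (s i) (s' i)) -> forall i, howeV G (up_sub s i) (up_sub s' i).
Proof.
move=> H i; rewrite /up_sub; case: (unlift ord0 i) => [j|].
- exact: (howe_ren.1 _ _ _ (H j)).
- exact: (howe_refl _).1.
Qed.

Lemma howe_sub :
  (forall n (V W : Defs.val Sg n), howeV G V W ->
     forall m (s s' : 'I_n -> Defs.val Sg m), (forall i, howeV G (s i) (s' i)) ->
     howeV G (sub_val s V) (sub_val s' W)) /\
  (forall n (P Q : Defs.comp Sg n), howeT G P Q ->
     forall m (s s' : 'I_n -> Defs.val Sg m), (forall i, howeV G (s i) (s' i)) ->
     howeT G (sub_comp s P) (sub_comp s' Q)).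
Proof.
apply: howe_ind => /=.
- move=> n x V H m s s' Hs; apply: (proj1 howe_open _ _ _ (Hs x)); exact: (openV_sub s' H).
- move=> n B L V HB IH H m s s' Hs; apply: H2 (IH _ _ _ (howe_up Hs)) _; exact: (openV_sub s' H).
- move=> n V W N HV IH H m s s' Hs; apply: H3 (IH _ _ _ Hs) _; exact: (openT_sub s' H).
- move=> n V V' W W' N HV IH HW IH' H m s s' Hs; apply: H4 (IH _ _ _ Hs) (IH' _ _ _ Hs) _.
  exact: (openT_sub s' H).
- move=> n P L P' L' N HP IH HP' IH' H m s s' Hs.
  apply: H5 (IH _ _ _ Hs) (IH' _ _ _ (howe_up Hs)) _; exact: (openT_sub s' H).
- move=> n s0 Ps Ns N HP IH H m s s' Hs; apply: (H6 (Ns := fun i => sub_comp s' (Ns i))).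
  + move=> i; exact: IH.
  + exact: (openT_sub s' H).
Qed.

Lemma howe_subst1 (B L : Defs.comp Sg 1) W W' :
  howeT G B L -> howeV G W W' -> howeT G (subst1 B W) (subst1 L W').
Proof. move=> HB HW; apply: (proj2 howe_sub _ _ _ HB) => i; exact: HW. Qed.

Lemma howeV_inv n (U V : Defs.val Sg n) : howeV G U V ->
  match U with
  | Lam B => exists L, howeT G B L /\ openV G (Lam L) V
  | Var _ => True end.
Proof. case => // n0 B L V0 HB HL; by exists L. Qed.

Lemma howeT_inv n (P N : Defs.comp Sg n) : howeT G P N ->
  match P with
  | Ret V => exists W, howeV G V W /\ openT G (Ret W) N
  | App V W => exists V' W', [/\ howeV G V V', howeV G W W' & openT G (App V' W') N]
  | Seq P P' => exists L L', [/\ howeT G P L, howeT G P' L' & openT G (Seq L L') N]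
  | Op s Ps => exists Ns, (forall i, howeT G (Ps i) (Ns i)) /\ openT G (Op s Ns) N
  end.
Proof.
case.
- move=> *; eexists; eauto.
- move=> *; do 2 eexists; split; eauto.
- move=> *; do 2 eexists; split; eauto.
- move=> *; eexists; eauto.
Qed.

End Howe.

Section Main.
Variables (Sg : signature) (M : cmonad Sg) (G : relator M).
Hypotheses (Hind : rel_inductive G) (Hresp : rel_respects_sig G).

Let HV := fun V W : Defs.val Sg 0 => howeV G V W.

Lemma compose u v w : Gam G HV u v -> Gam G (simV G) v w -> Gam G HV u w.
Proof.
move=> H1 H2; apply: rel_mono (rel_comp H1 H2) => x z [y [Hxy Hyz]].
exact: (proj1 (howe_open G) _ _ _ Hxy _ (openV0 Hyz)).
Qed.

Lemma key k : forall P Q : Defs.comp Sg 0, howeT G P Q -> Gam G HV (approx M k P) (den M Q).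
Proof.
elim: k => [|k IH] P Q H; first exact: Hind.1.
move: (howeT_inv H); case: P H => [V|V W|P P'|s Ps] H /=.
- case=> W [HVW HO]; apply: compose (rel_ret _ HVW) _.
  rewrite -den_ret; exact: (proj1 (sim_is_sim G) _ _ (openT0 HO)).
- case: V H => [x|B] H; first by exfalso; case: x H => m Hm _; move: Hm; rewrite ltn0.
  case=> V' [W' [HV' HW HO]]; have [L [HB HL]] := howeV_inv HV'.
  apply: compose (IH _ _ (howe_subst1 HB HW)) _.
  rewrite -den_app; apply: (proj1 (sim_is_sim G)).
  apply: simT_trans (openT0 HO).
  exact: (proj2 (sim_is_sim G) _ _ (openV0' HL) W').
- case=> L [L' [HP HP' HO]].
  apply: compose _ (proj1 (sim_is_sim G) _ _ (openT0 HO)).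
  rewrite den_seq; apply: (rel_bind _ (IH _ _ HP)) => x y Hxy.
  apply: IH; exact: howe_subst1.
- case=> Ns [HP HO].
  apply: compose _ (proj1 (sim_is_sim G) _ _ (openT0 HO)).
  rewrite den_op; apply: Hresp => i; exact: IH.
Qed.

End Main.

Unset Implicit Arguments.
Set Strict Implicit.

Theorem mainTheorem9 (Sg : signature) (M : cmonad Sg) (G : relator M)
  (Hind : rel_inductive G) (Hresp : rel_respects_sig G) :
  app_sim G (fun P Q => howeT G P Q) (fun V W => howeV G V W).
Proof.
split.
- move=> P Q H; rewrite {1}/den; apply: Hind.2; first exact: chain_approx.
  move=> n; exact: key.
- move=> V W H U; apply: H4 H ((howe_refl G _).1 U) _; exact: openT_refl.
Qed.
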